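(* Let $\mathscr K$ be a quasivariety of structures and let $n\ge1$ be an integer. Let $\mathbf F=\mathbf F_{\mathscr K}(n)$ be the $n$-generated $\mathscr K$-free structure, let $\mathbf T_n$ be the join semilattice (with $0$) of compact elements of $\operatorname{Con}_{\mathscr K}\mathbf F$, and let $\widehat{\mathscr E}=\{\widehat\varepsilon:\varepsilon\in\operatorname{End}\mathbf F\}$. Then the lattice of all quasi-equational theories that (1) contain the theory of $\mathscr K$ and (2) are determined relative to $\mathscr K$ by quasi-identities in at most $n$ variables, ordered by inclusion, is isomorphic to $\operatorname{Con}\mathbf S_n$, where $\mathbf S_n=\langle\mathbf T_n,\vee,0,\widehat{\mathscr E}\rangle$.
   Context: Structures have a signature of function and relation symbols; homomorphisms preserve operations and map relations into relations. A congruence on a structure $\mathbf A$ is a pair $\theta=\langle\theta_0,\theta_1\rangle$ with $\theta_0$ an equivalence relation compatible with the operations and, for each relation symbol $R$ of arity $m$, a set $\theta_1^R$ with $R^{\mathbf A}\subseteq\theta_1^R\subseteq A^m$ closed under componentwise $\theta_0$-equivalence. A quasivariety is a class of structures closed under substructures, direct products and ultraproducts, equivalently axiomatized by quasi-identities $\&_i\alpha_i\Rightarrow\beta$ with atomic formulae of the form $s\approx t$ or $R(\mathbf s)$ (equality being true equality); a quasi-equational theory is the set of quasi-identities valid in a quasivariety. A congruence $\psi$ of $\mathbf F$ is a $\mathscr K$-congruence if $\mathbf F/\psi\in\mathscr K$; these form an algebraic lattice $\operatorname{Con}_{\mathscr K}\mathbf F$, whose compact elements are the finite joins of the principal $\mathscr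 K$-congruences $\operatorname{con}_{\mathscr K}\alpha$ generated by single atomic formulae $\alpha$ over $\mathbf F$. For $\varepsilon\in\operatorname{End}\mathbf F$, $\widehat\varepsilon$ is defined by $\widehat\varepsilon(\operatorname{con}_{\mathscr K}(s,t))=\operatorname{con}_{\mathscr K}(\varepsilon s,\varepsilon t)$, $\widehat\varepsilon(\operatorname{con}_{\mathscr K}R(\mathbf s))=\operatorname{con}_{\mathscr K}R(\varepsilon\mathbf s)$, $\widehat\varepsilon(\bigvee_j\varphi_j)=\bigvee_j\widehat\varepsilon\varphi_j$; it is well defined and preserves joins and $0$. $\operatorname{Con}\mathbf S_n$ is the lattice of equivalence relations on $T_n$ compatible with $\vee$ and all $\widehat\varepsilon$. *)

(* Defs.v *)
From Stdlib Require Import List ClassicalEpsilon.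
Set Implicit Arguments.
Unset Strict Implicit.

Definition fin (n : nat) := {i : nat | i < n}.

Record signature := Signature {
  fsym : Type; farity : fsym -> nat;
  rsym : Type; rarity : rsym -> nat }.

Record structure (S : signature) := Structure {
  carrier :> Type;
  fun_of : forall f : fsym S, (fin (farity f) -> carrier) -> carrier;
  rel_of : forall r : rsym S, (fin (rarity r) -> carrier) -> Prop }.
Arguments fun_of {S} s f _ : rename.
Arguments rel_of {S} s r _ : rename.

Record hom (S : signature) (A B : structure S) := Hom {
  hmap :> A -> B;
  hom_fun : forall f args, hmap (fun_of A f args) = fun_of B f (fun i => hmap (args i));
  hom_rel : forall r args, rel_of A r args -> rel_of B r (fun i => hmap (args i)) }.

Inductive term (S : signature) (V : Type) : Type :=
| Var : V -> term S V
| App : forall f : fsym S, (fin (farity f) -> term S V) -> term S V.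
Arguments Var {S V} _.
Arguments App {S V} f _.

Fixpoint eval (S : signature) (A : structure S) (V : Type) (v : V -> A)
  (t : term S V) : A :=
  match t with
  | Var x => v x
  | App f args => fun_of A f (fun i => eval v (args i))
  end.
Arguments eval {S} A {V} v t.

Inductive atom (S : signature) (V : Type) : Type :=
| AEq : term S V -> term S V -> atom S V
| ARel : forall r : rsym S, (fin (rarity r) -> term S V) -> atom S V.
Arguments AEq {S V} _ _.
Arguments ARel {S V} r _.

Definition holds (S : signature) (A : structure S) (V : Type) (v : V -> A)
  (a : atom S V) : Prop :=
  match a with
  | AEq s t => eval A v s = eval A v t
  | ARel r ts => rel_of A r (fun i => eval A v (ts i))
  end.
Arguments holds {S} A {V} v a.

Record qi (S : signature) := QI { prems : list (atom S nat); concl : atom S nat }.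

Definition sat (S : signature) (A : structure S) (q : qi S) : Prop :=
  forall v : nat -> A,
    (forall a, In a (prems q) -> holds A v a) -> holds A v (concl q).

Definition Mod (S : signature) (Ax : qi S -> Prop) (A : structure S) : Prop :=
  forall q, Ax q -> sat A q.

Definition conseq (S : signature) (Ax : qi S -> Prop) (q : qi S) : Prop :=
  forall A : structure S, Mod Ax A -> sat A q.

Definition qe_theory (S : signature) (T : qi S -> Prop) : Prop :=
  exists Ax : qi S -> Prop, forall q, T q <-> conseq Ax q.

Fixpoint occurs_term (S : signature) (x : nat) (t : term S nat) : Prop :=
  match t with
  | Var y => x = y
  | App f args => exists i, occurs_term x (args i)
  end.

Definition occurs_atom (S : signature) (x : nat) (a : atom S nat) : Prop :=
  match a with
  | AEq s t => occurs_term x s \/ occurs_term x t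
  | ARel r ts => exists i, occurs_term x (ts i)
  end.

Definition occurs_qi (S : signature) (x : nat) (q : qi S) : Prop :=
  (exists a, In a (prems q) /\ occurs_atom x a) \/ occurs_atom x (concl q).

Definition nvars_le (S : signature) (n : nat) (q : qi S) : Prop :=
  exists l : list nat, length l <= n /\ forall x, occurs_qi x q -> In x l.

(* The theories of the lattice in the theorem: quasi-equational theories T
   (1) containing the theory of K = Mod Ax and
   (2) determined relative to K by their quasi-identities in <= n variables. *)
Definition rel_theory (S : signature) (Ax : qi S -> Prop) (n : nat)
  (T : qi S -> Prop) : Prop :=
  qe_theory T /\
  (forall q, conseq Ax q -> T q) /\
  (forall q, T q <-> conseq (fun q' => Ax q' \/ (T q' /\ nvars_le n q')) q).

Definition is_free (S : signature) (Ax : qi S -> Prop) (n : nat)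
  (F : structure S) (gen : fin n -> F) : Prop :=
  Mod Ax F /\
  (forall x : F, exists t : term S (fin n), eval F gen t = x) /\
  (forall (A : structure S), Mod Ax A -> forall a : fin n -> A,
      exists h : hom F A, forall i, h (gen i) = a i).

Definition cpair (S : signature) (A : structure S) : Type :=
  ((A -> A -> Prop) * (forall r : rsym S, (fin (rarity r) -> A) -> Prop))%type.

Definition is_congruence (S : signature) (A : structure S) (th : cpair A) : Prop :=
  (forall a, fst th a a) /\
  (forall a b, fst th a b -> fst th b a) /\
  (forall a b c, fst th a b -> fst th b c -> fst th a c) /\
  (forall f (a b : fin (farity f) -> A),
      (forall i, fst th (a i) (b i)) -> fst th (fun_of A f a) (fun_of A f b)) /\
  (forall r s, rel_of A r s -> snd th r s) /\
  (forall r (s s' : fin (rarity r) -> A),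
      (forall i, fst th (s i) (s' i)) -> snd th r s -> snd th r s').

Definition qcarrier (S : signature) (A : structure S) (e : A -> A -> Prop) : Type :=
  {P : A -> Prop | exists a, P = e a}.
Arguments qcarrier {S} A e.
Definition qrep (S : signature) (A : structure S) (e : A -> A -> Prop)
  (x : qcarrier A e) : A :=
  proj1_sig (constructive_indefinite_description _ (proj2_sig x)).
Definition qcls (S : signature) (A : structure S) (e : A -> A -> Prop)
  (a : A) : qcarrier A e :=
  exist _ (e a) (ex_intro _ a eq_refl).

Definition quotient (S : signature) (A : structure S) (th : cpair A) : structure S :=
  {| carrier := qcarrier A (fst th);
     fun_of := fun f args => qcls (fst th) (fun_of A f (fun i => qrep (args i)));
     rel_of := fun r args => snd th r (fun i => qrep (args i)) |}.

Definition kcong (S : signature) (Ax : qi S -> Prop) (A : structure S)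
  (psi : cpair A) : Prop :=
  is_congruence psi /\ Mod Ax (quotient psi).

Definition cle (S : signature) (A : structure S) (p q : cpair A) : Prop :=
  (forall a b, fst p a b -> fst q a b) /\ (forall r s, snd p r s -> snd q r s).
Definition ceq (S : signature) (A : structure S) (p q : cpair A) : Prop :=
  cle p q /\ cle q p.

Definition kgen (S : signature) (Ax : qi S -> Prop) (A : structure S)
  (Q : cpair A -> Prop) : cpair A :=
  (fun a b => forall chi, kcong Ax chi -> Q chi -> fst chi a b,
   fun r s => forall chi, kcong Ax chi -> Q chi -> snd chi r s).

Definition kjoin (S : signature) (Ax : qi S -> Prop) (A : structure S)
  (P : cpair A -> Prop) : cpair A :=
  kgen Ax (fun chi => forall psi, P psi -> cle psi chi).

Inductive fatom (S : signature) (A : structure S) : Type :=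
| FEq : A -> A -> fatom A
| FRel : forall r : rsym S, (fin (rarity r) -> A) -> fatom A.
Arguments FEq {S A} _ _.
Arguments FRel {S A} r _.

Definition fatom_in (S : signature) (A : structure S) (th : cpair A)
  (al : fatom A) : Prop :=
  match al with
  | FEq a b => fst th a b
  | FRel r s => snd th r s
  end.

Definition fatom_map (S : signature) (A : structure S) (h : A -> A)
  (al : fatom A) : fatom A :=
  match al with
  | FEq a b => FEq (h a) (h b)
  | FRel r s => FRel r (fun i => h (s i))
  end.

Definition con (S : signature) (Ax : qi S -> Prop) (A : structure S)
  (al : fatom A) : cpair A :=
  kgen Ax (fun chi => fatom_in chi al).

Definition conj_list (S : signature) (Ax : qi S -> Prop) (A : structure S)
  (l : list (fatom A)) : cpair A :=
  kjoin Ax (fun psi => exists al, In al l /\ psi = con Ax al).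

Definition compact (S : signature) (Ax : qi S -> Prop) (A : structure S)
  (phi : cpair A) : Prop :=
  exists l : list (fatom A), ceq phi (conj_list Ax l).

Definition Tn (S : signature) (Ax : qi S -> Prop) (F : structure S) : Type :=
  {phi : cpair F | compact Ax phi}.

Definition is_join (S : signature) (Ax : qi S -> Prop) (F : structure S)
  (x y z : Tn Ax F) : Prop :=
  ceq (proj1_sig z)
      (kjoin Ax (fun psi => psi = proj1_sig x \/ psi = proj1_sig y)).

Definition ehat_rel (S : signature) (Ax : qi S -> Prop) (F : structure S)
  (eps : hom F F) (x y : Tn Ax F) : Prop :=
  exists l : list (fatom F),
    ceq (proj1_sig x) (conj_list Ax l) /\
    ceq (proj1_sig y) (conj_list Ax (map (fatom_map eps) l)).

Definition ConS (S : signature) (Ax : qi S -> Prop) (F : structure S)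
  (th : Tn Ax F -> Tn Ax F -> Prop) : Prop :=
  (forall x, th x x) /\
  (forall x y, th x y -> th y x) /\
  (forall x y z, th x y -> th y z -> th x z) /\
  (forall x y z x' y' z', is_join x y z -> is_join x' y' z' ->
      th x x' -> th y y' -> th z z') /\
  (forall (eps : hom F F) x y x' y', ehat_rel eps x x' -> ehat_rel eps y y' ->
      th x y -> th x' y').
Arguments is_free {S} Ax n F gen.
Arguments ConS {S} Ax F th.

(* Main.v *)
Require Import Defs.
From Stdlib Require Import List ClassicalEpsilon FunctionalExtensionality PropExtensionality ProofIrrelevance Lia PeanoNat.
Import ListNotations.

Lemma eval_hom {S} {A B : structure S} (h : hom A B) {V} (w : V -> A) t :
  h (eval A w t) = eval B (fun k => h (w k)) t.
Proof.
  induction t as [x|f args IH]; simpl; [reflexivity|].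
  rewrite (hom_fun h). f_equal. apply functional_extensionality; intro i; apply IH.
Qed.

Lemma eval_ext {S} (A : structure S) {V} (v w : V -> A) t :
  (forall k, v k = w k) -> eval A v t = eval A w t.
Proof.
  intro H; induction t as [x|f args IH]; simpl; [apply H|].
  f_equal. apply functional_extensionality; intro i; apply IH.
Qed.

Definition evatom {S} (A : structure S) {V} (w : V -> A) (a : atom S V) : fatom A :=
  match a with
  | AEq s t => FEq (eval A w s) (eval A w t)
  | ARel r ts => FRel r (fun i => eval A w (ts i))
  end.

Definition qsat {S} {A : structure S} (th : cpair A) (q : qi S) : Prop :=
  forall w : nat -> A, (forall a, In a (prems q) -> fatom_in th (evatom A w a)) ->
    fatom_in th (evatom A w (concl q)).

Lemma fatom_in_cle {S} {A : structure S} (p q : cpair A) al :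
  cle p q -> fatom_in p al -> fatom_in q al.
Proof. intros [H1 H2]; destruct al; simpl; auto. Qed.

Section Q.
Lemma qrep_spec {S} {A : structure S} {e : A -> A -> Prop} (x : qcarrier A e) :
  proj1_sig x = e (qrep x).
Proof. unfold qrep. destruct constructive_indefinite_description; simpl; auto. Qed.
End Q.

Lemma qrep_qcls {S} {A : structure S} (th : cpair A) (Hc : is_congruence th) a :
  fst th a (qrep (qcls (fst th) a)).
Proof.
  pose proof (qrep_spec (qcls (fst th) a)) as E. simpl in E.
  destruct Hc as [R _]. rewrite E. apply R.
Qed.

Lemma qeq {S} {A : structure S} (th : cpair A) (Hc : is_congruence th)
  (x y : qcarrier A (fst th)) : fst th (qrep x) (qrep y) -> x = y.
Proof.
  intro H. destruct Hc as [R [Sy [Tr _]]].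
  assert (E : proj1_sig x = proj1_sig y).
  { rewrite (qrep_spec x), (qrep_spec y). apply functional_extensionality; intro z.
    apply propositional_extensionality; split; intro K; eauto. }
  destruct x as [P HP], y as [Q HQ]; simpl in E; subst. f_equal; apply proof_irrelevance.
Qed.

Lemma eval_compat {S} {A : structure S} (th : cpair A) (Hc : is_congruence th) {V}
  (v w : V -> A) t : (forall k, fst th (v k) (w k)) -> fst th (eval A v t) (eval A w t).
Proof.
  intro H; destruct Hc as [R [Sy [Tr [Fc _]]]].
  induction t as [x|f args IH]; simpl; auto.
Qed.

Lemma qeval {S} {A : structure S} (th : cpair A) (Hc : is_congruence th) {V}
  (v : V -> quotient th) t :
  fst th (qrep (eval (quotient th) v t)) (eval A (fun k => qrep (v k)) t).
Proof.
  pose proof Hc as Hc'. destruct Hc' as [R [Sy [Tr [Fc _]]]].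
  induction t as [x|f args IH]; simpl; [apply R|].
  eapply Tr. apply Sy. apply (qrep_qcls th Hc). apply Fc. apply IH.
Qed.

Lemma qholds {S} {A : structure S} (th : cpair A) (Hc : is_congruence th) {V}
  (v : V -> quotient th) (w : V -> A) a :
  (forall k, fst th (qrep (v k)) (w k)) ->
  (holds (quotient th) v a <-> fatom_in th (evatom A w a)).
Proof.
  intro Hvw. pose proof Hc as Hc'. destruct Hc' as [R [Sy [Tr [Fc [Rc Rcl]]]]].
  assert (ex : forall t, fst th (qrep (eval (quotient th) v t)) (eval A w t)).
  { intro t. eapply Tr. apply qeval; auto. apply eval_compat; auto. }
  destruct a as [s t | r ts]; simpl.
  - split; intro H.
    + pose proof (ex s) as Es; pose proof (ex t) as Et; rewrite H in Es.
      eapply Tr; [apply Sy, Es| apply Et].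
    + apply (qeq th Hc). eapply Tr; [apply (ex s)|]. eapply Tr; [exact H|]. apply Sy, (ex t).
  - split; intro H.
    + eapply Rcl; [|exact H]. intro i. apply ex.
    + eapply Rcl; [|exact H]. intro i. apply Sy, ex.
Qed.

Lemma sat_quot {S} {A : structure S} (th : cpair A) (Hc : is_congruence th) q :
  sat (quotient th) q <-> qsat th q.
Proof.
  pose proof Hc as Hc'. destruct Hc' as [R [Sy [Tr _]]].
  split.
  - intros H w Hp.
    set (v := fun k => qcls (fst th) (w k) : quotient th).
    assert (Hvw : forall k, fst th (qrep (v k)) (w k)).
    { intro k. apply Sy, qrep_qcls; auto. }
    apply (qholds th Hc v w _ Hvw). apply H. intros a Ha. apply (qholds th Hc v w _ Hvw); auto.
  - intros H v Hp.
    apply (qholds th Hc v (fun k => qrep (v k))); [intro; apply R|].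
    apply H. intros a Ha. apply (qholds th Hc v (fun k => qrep (v k))); [intro; apply R|]. auto.
Qed.

Lemma kcong_iff {S} (Ax : qi S -> Prop) {A : structure S} (th : cpair A) :
  kcong Ax th <-> is_congruence th /\ forall q, Ax q -> qsat th q.
Proof.
  unfold kcong, Mod. split; intros [Hc H]; split; auto; intros q Hq; apply (sat_quot th Hc); auto.
Qed.

Lemma kcong_cong {S} (Ax : qi S -> Prop) {A : structure S} (th : cpair A) :
  kcong Ax th -> is_congruence th.
Proof. intros [H _]; auto. Qed.

Lemma kcong_qsat {S} (Ax : qi S -> Prop) {A : structure S} (th : cpair A) q :
  kcong Ax th -> Ax q -> qsat th q.
Proof. intros H; apply kcong_iff in H; destruct H; auto. Qed.

Lemma kgen_le {S} (Ax : qi S -> Prop) {A : structure S} (Q : cpair A -> Prop) chi :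
  kcong Ax chi -> Q chi -> cle (kgen Ax Q) chi.
Proof. intros H1 H2; split; simpl; intros; auto. Qed.

Lemma fatom_in_kgen {S} (Ax : qi S -> Prop) {A : structure S} (Q : cpair A -> Prop) al :
  (forall chi, kcong Ax chi -> Q chi -> fatom_in chi al) -> fatom_in (kgen Ax Q) al.
Proof. destruct al; simpl; intros H chi H1 H2; apply (H chi H1 H2). Qed.

Lemma kgen_kcong {S} (Ax : qi S -> Prop) {A : structure S} (Q : cpair A -> Prop) :
  kcong Ax (kgen Ax Q).
Proof.
  apply kcong_iff. split.
  - repeat split; simpl.
    + intros a chi Hk _. destruct (kcong_cong _ _ Hk) as [R _]; auto.
    + intros a b H chi Hk HQ. destruct (kcong_cong _ _ Hk) as [R [Sy _]]; auto.
    + intros a b c H1 H2 chi Hk HQ. destruct (kcong_cong _ _ Hk) as [R [Sy [Tr _]]]; eauto.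
    + intros f a b H chi Hk HQ. destruct (kcong_cong _ _ Hk) as [R [Sy [Tr [Fc _]]]].
      apply Fc. intro i; apply H; auto.
    + intros r s H chi Hk HQ. destruct (kcong_cong _ _ Hk) as [R [Sy [Tr [Fc [Rc _]]]]]; auto.
    + intros r s s' H1 H2 chi Hk HQ. destruct (kcong_cong _ _ Hk) as [R [Sy [Tr [Fc [Rc Rcl]]]]].
      eapply Rcl; [|apply H2; auto]. intro i; apply H1; auto.
  - intros q Hq w Hp. apply fatom_in_kgen. intros chi Hk HQ.
    apply (kcong_qsat Ax chi q Hk Hq). intros a Ha.
    eapply fatom_in_cle; [apply (kgen_le Ax Q chi Hk HQ)|]. auto.
Qed.

Lemma cle_refl {S} {A : structure S} (p : cpair A) : cle p p.
Proof. split; auto. Qed.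
Lemma cle_trans {S} {A : structure S} (p q r : cpair A) : cle p q -> cle q r -> cle p r.
Proof. intros [H1 H2] [H3 H4]; split; auto. Qed.

Lemma kj1 {S} (Ax : qi S -> Prop) {A : structure S} (P : cpair A -> Prop) p :
  P p -> cle p (kjoin Ax P).
Proof. intro Hp; split; simpl; intros ? ? ? chi _ H1; destruct (H1 p Hp); auto. Qed.

Lemma kj2 {S} (Ax : qi S -> Prop) {A : structure S} (P : cpair A -> Prop) chi :
  kcong Ax chi -> (forall p, P p -> cle p chi) -> cle (kjoin Ax P) chi.
Proof. intros; apply kgen_le; auto. Qed.

Lemma kj3 {S} (Ax : qi S -> Prop) {A : structure S} (P : cpair A -> Prop) :
  kcong Ax (kjoin Ax P).
Proof. apply kgen_kcong. Qed.

Lemma con_in {S} (Ax : qi S -> Prop) {A : structure S} (al : fatom A) :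
  fatom_in (con Ax al) al.
Proof. apply fatom_in_kgen; auto. Qed.

Lemma con_le {S} (Ax : qi S -> Prop) {A : structure S} (al : fatom A) chi :
  kcong Ax chi -> fatom_in chi al -> cle (con Ax al) chi.
Proof. intros; apply kgen_le; auto. Qed.

Lemma conj_list_le {S} (Ax : qi S -> Prop) {A : structure S} (l : list (fatom A)) chi :
  kcong Ax chi -> (cle (conj_list Ax l) chi <-> forall al, In al l -> fatom_in chi al).
Proof.
  intro Hk; split.
  - intros H al Hal. eapply fatom_in_cle; [|apply (con_in Ax al)].
    eapply cle_trans; [|exact H]. apply kj1. eauto.
  - intro H. apply kj2; auto. intros p [al [Hal ->]]. apply con_le; auto.
Qed.

Lemma conj_list_in {S} (Ax : qi S -> Prop) {A : structure S} (l : list (fatom A)) al :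
  In al l -> fatom_in (conj_list Ax l) al.
Proof.
  intro H. apply (conj_list_le Ax l (conj_list Ax l) (kj3 _ _)); auto. apply cle_refl.
Qed.

Lemma kcong_ceq {S} (Ax : qi S -> Prop) {A : structure S} (p q : cpair A) :
  kcong Ax p -> ceq p q -> kcong Ax q.
Proof.
  intros Hk [[H1 H2] [H3 H4]]. apply kcong_iff in Hk. destruct Hk as [[R [Sy [Tr [Fc [Rc Rcl]]]]] Hq].
  apply kcong_iff. split.
  - repeat split; eauto.
  - intros q0 Hq0 w Hp. eapply fatom_in_cle; [split; eauto|]. apply Hq; auto.
    intros a Ha. eapply fatom_in_cle; [split; eauto|]. auto.
Qed.

Lemma compact_kcong {S} (Ax : qi S -> Prop) {A : structure S} (x : cpair A) :
  compact Ax x -> kcong Ax x.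
Proof.
  intros [l [H1 H2]]. eapply kcong_ceq; [apply kj3|]. split; eauto.
Qed.

Definition kerc {S} {A B : structure S} (h : hom A B) : cpair A :=
  (fun a b => h a = h b, fun r s => rel_of B r (fun i => h (s i))).

Definition satc {S} {A B : structure S} (h : hom A B) (u : cpair A) := cle u (kerc h).

Lemma ker_holds {S} {A B : structure S} (h : hom A B) {V} (w : V -> A) a :
  fatom_in (kerc h) (evatom A w a) <-> holds B (fun k => h (w k)) a.
Proof.
  destruct a as [s t|r ts]; simpl; rewrite ?eval_hom; [tauto|].
  replace (fun i => h (eval A w (ts i))) with (fun i => eval B (fun k => h (w k)) (ts i)); [tauto|].
  apply functional_extensionality; intro i; rewrite eval_hom; auto.
Qed.

Lemma ker_kcong {S} (Ax : qi S -> Prop) {A B : structure S} (h : hom A B) :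
  Mod Ax B -> kcong Ax (kerc h).
Proof.
  intro HB. apply kcong_iff. split.
  - split; [|split; [|split; [|split; [|split]]]]; simpl.
    + reflexivity.
    + intros; symmetry; auto.
    + intros a b c -> ->; auto.
    + intros f a b H. rewrite !(hom_fun h). f_equal. apply functional_extensionality; auto.
    + intros r s H. apply (hom_rel h); auto.
    + intros r s s' H1 H2. replace (fun i => h (s' i)) with (fun i => h (s i)); auto.
      apply functional_extensionality; auto.
  - intros q Hq w Hp. apply ker_holds. apply (HB q Hq). intros a Ha. apply ker_holds; auto.
Qed.

Definition hcomp {S} {A B C : structure S} (h : hom B C) (g : hom A B) : hom A C.
Proof.
  refine (@Hom S A C (fun a => h (g a)) _ _).
  - intros f args. rewrite (hom_fun g), (hom_fun h). reflexivity.
  - intros r args H. apply (hom_rel h). apply (hom_rel g). auto.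
Defined.

Lemma satc_conj {S} (Ax : qi S -> Prop) {A B : structure S} (h : hom A B) u l :
  Mod Ax B -> ceq u (conj_list Ax l) -> (satc h u <-> forall al, In al l -> fatom_in (kerc h) al).
Proof.
  intros HB [H1 H2]. unfold satc. rewrite <- (conj_list_le Ax l (kerc h) (ker_kcong Ax h HB)).
  split; intro H; eapply cle_trans; eauto.
Qed.

Lemma ker_map {S} {A B : structure S} (h : hom A B) (eps : hom A A) al :
  fatom_in (kerc h) (fatom_map eps al) <-> fatom_in (kerc (hcomp h eps)) al.
Proof. destruct al; simpl; tauto. Qed.

Definition fT {S} (Ax : qi S -> Prop) (F : structure S) (T : qi S -> Prop) (x y : Tn Ax F) :=
  forall A : structure S, Mod T A -> forall h : hom F A,
    satc h (proj1_sig x) <-> satc h (proj1_sig y).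

Lemma satc_join {S} (Ax : qi S -> Prop) {F A : structure S} (h : hom F A) (x y z : Tn Ax F) :
  Mod Ax A -> is_join x y z -> (satc h (proj1_sig z) <-> satc h (proj1_sig x) /\ satc h (proj1_sig y)).
Proof.
  intros HA [H1 H2]. unfold satc. split.
  - intro H; split; (eapply cle_trans; [|exact H]); (eapply cle_trans; [|exact H2]); apply kj1; auto.
  - intros [Hx Hy]. eapply cle_trans; [exact H1|]. apply kj2. apply ker_kcong; auto.
    intros p [->| ->]; auto.
Qed.

Lemma fT_ConS {S} (Ax : qi S -> Prop) (F : structure S) (T : qi S -> Prop) :
  (forall A, Mod T A -> Mod Ax A) -> ConS Ax F (fT Ax F T).
Proof.
  intro HT. unfold fT. split; [|split; [|split; [|split]]].
  - intros x A HA h; tauto.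
  - intros x y H A HA h; specialize (H A HA h); tauto.
  - intros x y z H1 H2 A HA h; specialize (H1 A HA h); specialize (H2 A HA h); tauto.
  - intros x y z x' y' z' J J' H1 H2 A HA h. specialize (H1 A HA h); specialize (H2 A HA h).
    rewrite (satc_join Ax h x y z (HT A HA) J), (satc_join Ax h x' y' z' (HT A HA) J'). tauto.
  - intros eps x y x' y' [l [Hx Hx']] [m [Hy Hy']] H1 A H2 h.
    pose proof (HT A H2) as HA.
    assert (E1 : satc h (proj1_sig x') <-> satc (hcomp h eps) (proj1_sig x)).
    { rewrite (satc_conj Ax h _ _ HA Hx'), (satc_conj Ax _ _ _ HA Hx). split; intros Z al Hal.
      - apply ker_map. apply Z. apply in_map; auto.
      - apply in_map_iff in Hal. destruct Hal as [b [<- Hb]]. apply ker_map; auto. }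
    assert (E2 : satc h (proj1_sig y') <-> satc (hcomp h eps) (proj1_sig y)).
    { rewrite (satc_conj Ax h _ _ HA Hy'), (satc_conj Ax _ _ _ HA Hy). split; intros Z al Hal.
      - apply ker_map. apply Z. apply in_map; auto.
      - apply in_map_iff in Hal. destruct Hal as [b [<- Hb]]. apply ker_map; auto. }
    rewrite E1, E2. apply H1; auto.
Qed.

Lemma eval_occ {S} (A : structure S) (v w : nat -> A) t :
  (forall k, occurs_term k t -> v k = w k) -> eval A v t = eval A w t.
Proof.
  induction t as [x|f args IH]; simpl; intro H; [apply H; reflexivity|].
  f_equal. apply functional_extensionality; intro i; apply IH. intros k Hk; apply H; eauto.
Qed.

Lemma holds_occ {S} (A : structure S) (v w : nat -> A) a :
  (forall k, occurs_atom k a -> v k = w k) -> (holds A v a <-> holds A w a).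
Proof.
  destruct a as [s t|r ts]; simpl; intro H.
  - rewrite (eval_occ A v w s), (eval_occ A v w t); [tauto| |]; intros; apply H; auto.
  - replace (fun i => eval A v (ts i)) with (fun i => eval A w (ts i)); [tauto|].
    apply functional_extensionality; intro i; symmetry; apply eval_occ; intros; apply H; eauto.
Qed.

Fixpoint idx (x : nat) (l : list nat) : nat :=
  match l with [] => 0 | y :: l' => if Nat.eqb x y then 0 else S (idx x l') end.

Lemma idx_spec x l : In x l -> idx x l < length l /\ nth (idx x l) l 0 = x.
Proof.
  induction l as [|y l IH]; simpl; [tauto|]. intro H.
  destruct (Nat.eqb_spec x y) as [->|Hne]; [split; [lia|reflexivity]|].
  destruct H as [->|H]; [congruence|]. destruct (IH H); split; [lia|auto].
Qed.

Definition to_fin (n : nat) (Hn : 1 <= n) (m : nat) : fin n :=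
  match Compare_dec.lt_dec m n with left p => exist _ m p | right _ => exist _ 0 Hn end.

Lemma to_fin_val n Hn m : m < n -> proj1_sig (to_fin n Hn m) = m.
Proof. unfold to_fin; destruct Compare_dec.lt_dec; simpl; lia. Qed.

Definition relth {S} (Ax : qi S -> Prop) (n : nat) (T : qi S -> Prop) :=
  rel_theory Ax n T.

Lemma mod_T_Ax {S} (Ax : qi S -> Prop) n T A : rel_theory Ax n T -> Mod T A -> Mod Ax A.
Proof. intros [_ [H _]] HA q Hq. apply HA, H. intros B HB; apply HB; auto. Qed.

Section Enc.
Definition sig_of {S} {F : structure S} n (Hn : 1 <= n) (gen : fin n -> F) (l : list nat) : nat -> F :=
  fun k => gen (to_fin n Hn (idx k l)).

Definition encX {S} (Ax : qi S -> Prop) {F : structure S} (sg : nat -> F) (q : qi S) : Tn Ax F :=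
  exist _ (conj_list Ax (map (evatom F sg) (prems q)))
    (ex_intro _ _ (conj (cle_refl _) (cle_refl _))).
Definition encY {S} (Ax : qi S -> Prop) {F : structure S} (sg : nat -> F) (q : qi S) : Tn Ax F :=
  exist _ (conj_list Ax (evatom F sg (concl q) :: map (evatom F sg) (prems q)))
    (ex_intro _ _ (conj (cle_refl _) (cle_refl _))).
End Enc.

Lemma claim1 {S} (Ax : qi S -> Prop) n (F : structure S) (T : qi S -> Prop) (sg : nat -> F) q :
  rel_theory Ax n T -> T q -> fT Ax F T (encX Ax sg q) (encY Ax sg q).
Proof.
  intros HT Hq A HA h. pose proof (mod_T_Ax Ax n T A HT HA) as HAx.
  unfold encX, encY; simpl.
  rewrite (satc_conj Ax h _ _ HAx (conj (cle_refl _) (cle_refl _))).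
  rewrite (satc_conj Ax h _ _ HAx (conj (cle_refl _) (cle_refl _))).
  split; intros H al Hal.
  - destruct Hal as [<-|Hal]; auto.
    apply ker_holds. apply (HA q Hq). intros a Ha. apply ker_holds. apply H. apply in_map; auto.
  - apply H; right; auto.
Qed.

Lemma claim2 {S} (Ax : qi S -> Prop) n (Hn : 1 <= n) (F : structure S) (gen : fin n -> F)
  (HF : is_free Ax n F gen) (T : qi S -> Prop) q l :
  rel_theory Ax n T -> length l <= n -> (forall x, occurs_qi x q -> In x l) ->
  fT Ax F T (encX Ax (sig_of n Hn gen l) q) (encY Ax (sig_of n Hn gen l) q) -> T q.
Proof.
  intros HT Hl Hocc Hf. destruct HT as [HT1 [HT2 HT3]].
  apply HT3. intros A HA.
  assert (HAT : Mod T A). { intros q' Hq'. apply HT3 in Hq'. apply Hq'; auto. }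
  assert (HAx : Mod Ax A). { intros q' Hq'. apply HA; auto. }
  intros v Hp.
  unfold is_free in HF; destruct HF as [_ [_ Hfree]].
  destruct (Hfree A HAx (fun i => v (nth (proj1_sig i) l 0))) as [h Hh].
  set (sg := sig_of n Hn gen l).
  assert (Hs : forall k, In k l -> h (sg k) = v k).
  { intros k Hk. unfold sg, sig_of. rewrite Hh. destruct (idx_spec k l Hk).
    rewrite to_fin_val by lia. auto. }
  assert (Hat : forall a, (forall k, occurs_atom k a -> In k l) ->
     (fatom_in (kerc h) (evatom F sg a) <-> holds A v a)).
  { intros a Ha. rewrite ker_holds. apply holds_occ. intros k Hk. apply Hs; auto. }
  specialize (Hf A HAT h). unfold encX, encY in Hf; simpl in Hf.
  rewrite (satc_conj Ax h _ _ HAx (conj (cle_refl _) (cle_refl _))) in Hf.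
  rewrite (satc_conj Ax h _ _ HAx (conj (cle_refl _) (cle_refl _))) in Hf.
  apply Hat. { intros k Hk; apply Hocc; right; auto. }
  apply (proj1 Hf); [|left; reflexivity].
  intros al Hal. apply in_map_iff in Hal. destruct Hal as [a [<- Ha]].
  apply Hat; auto. intros k Hk; apply Hocc; left; eauto.
Qed.

Lemma order_part {S} (Ax : qi S -> Prop) n (Hn : 1 <= n) (F : structure S) (gen : fin n -> F)
  (HF : is_free Ax n F gen) (T T' : qi S -> Prop) :
  rel_theory Ax n T -> rel_theory Ax n T' ->
  ((forall q, T q -> T' q) <-> (forall x y, fT Ax F T x y -> fT Ax F T' x y)).
Proof.
  intros HT HT'. split.
  - intros H x y Hf A HA h. apply Hf. intros q Hq; apply HA, H; auto.
  - intros H q Hq. pose proof HT as [_ [_ HT3]]. pose proof HT' as [_ [_ HT3']].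
    apply HT3 in Hq. apply HT3'. intros A HA. apply Hq. intros q' [Hq'|[Hq' [l [Hl Ho]]]].
    + apply HA; auto.
    + apply HA. right. split; [|exists l; auto].
      apply (claim2 Ax n Hn F gen HF T' q' l HT' Hl Ho). apply H. apply claim1 with (n := n); auto.
Qed.

Lemma ceq_refl {S} {A : structure S} (p : cpair A) : ceq p p.
Proof. split; apply cle_refl. Qed.

Lemma conj_list_app_l {S} (Ax : qi S -> Prop) {A : structure S} (l m : list (fatom A)) :
  cle (conj_list Ax l) (conj_list Ax (l ++ m)).
Proof. apply conj_list_le; [apply kj3|]. intros al H; apply conj_list_in, in_or_app; auto. Qed.
Lemma conj_list_app_r {S} (Ax : qi S -> Prop) {A : structure S} (l m : list (fatom A)) :
  cle (conj_list Ax m) (conj_list Ax (l ++ m)).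
Proof. apply conj_list_le; [apply kj3|]. intros al H; apply conj_list_in, in_or_app; auto. Qed.

Lemma join_compact {S} (Ax : qi S -> Prop) {F : structure S} (x z : Tn Ax F) :
  compact Ax (kjoin Ax (fun p => p = proj1_sig x \/ p = proj1_sig z)).
Proof.
  destruct x as [x [lx [Hx1 Hx2]]], z as [z [lz [Hz1 Hz2]]]; simpl.
  exists (lx ++ lz). split.
  - apply kj2; [apply kj3|]. intros p [->| ->].
    + eapply cle_trans; [exact Hx1|]. apply conj_list_app_l.
    + eapply cle_trans; [exact Hz1|]. apply conj_list_app_r.
  - apply conj_list_le; [apply kj3|]. intros al Hal. apply in_app_or in Hal as [Hal|Hal].
    + eapply fatom_in_cle; [|apply conj_list_in; exact Hal].
      eapply cle_trans; [exact Hx2|]. apply kj1; auto.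
    + eapply fatom_in_cle; [|apply conj_list_in; exact Hal].
      eapply cle_trans; [exact Hz2|]. apply kj1; auto.
Qed.

Definition joinT {S} {Ax : qi S -> Prop} {F : structure S} (x z : Tn Ax F) : Tn Ax F :=
  exist _ _ (join_compact Ax x z).

Definition pr {S} {Ax : qi S -> Prop} {F : structure S} (x : Tn Ax F) : cpair F := proj1_sig x.

Lemma Tn_kcong {S} {Ax : qi S -> Prop} {F : structure S} (x : Tn Ax F) : kcong Ax (pr x).
Proof. apply compact_kcong, (proj2_sig x). Qed.
Lemma Tn_cong {S} {Ax : qi S -> Prop} {F : structure S} (x : Tn Ax F) : is_congruence (pr x).
Proof. apply (kcong_cong Ax), Tn_kcong. Qed.

Lemma joinT_l {S} {Ax : qi S -> Prop} {F : structure S} (x z : Tn Ax F) : cle (pr x) (pr (joinT x z)).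
Proof. apply kj1; auto. Qed.
Lemma joinT_r {S} {Ax : qi S -> Prop} {F : structure S} (x z : Tn Ax F) : cle (pr z) (pr (joinT x z)).
Proof. apply kj1; auto. Qed.
Lemma joinT_lub {S} {Ax : qi S -> Prop} {F : structure S} (x z c : Tn Ax F) :
  cle (pr x) (pr c) -> cle (pr z) (pr c) -> cle (pr (joinT x z)) (pr c).
Proof. intros; apply kj2; [apply Tn_kcong|]. intros p [-> | ->]; auto. Qed.

Definition ceqT {S} {Ax : qi S -> Prop} {F : structure S} (x z : Tn Ax F) := ceq (pr x) (pr z).

Section Th.
Lemma th_ceq {S} {Ax : qi S -> Prop} {F : structure S} th (H : ConS Ax F th) (u u' : Tn Ax F) :
  ceqT u u' -> th u u'.
Proof.
  intros [H1 H2]. destruct H as [R [Sy [Tr [J E]]]].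
  assert (Ju : is_join u u u).
  { split; [apply kj1; auto|]. apply kj2; [apply Tn_kcong|]. intros p [->| ->]; apply cle_refl. }
  assert (Ju' : is_join u u u').
  { destruct Ju as [K1 K2]. split; eapply cle_trans; eauto. }
  apply (J u u u u u u' Ju Ju'); auto.
Qed.

Lemma th_join {S} {Ax : qi S -> Prop} {F : structure S} th (H : ConS Ax F th) (a a' b b' : Tn Ax F) :
  th a a' -> th b b' -> th (joinT a b) (joinT a' b').
Proof.
  destruct H as [R [Sy [Tr [J E]]]]. intros. apply (J a b (joinT a b) a' b' (joinT a' b')); auto; apply ceq_refl.
Qed.
End Th.

Lemma ceqT_intro {S} {Ax : qi S -> Prop} {F : structure S} (x z : Tn Ax F) :
  cle (pr x) (pr z) -> cle (pr z) (pr x) -> ceqT x z.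
Proof. split; auto. Qed.

Definition II {S} {Ax : qi S -> Prop} {F : structure S} (th : Tn Ax F -> Tn Ax F -> Prop) (x z : Tn Ax F) := th (joinT x z) x.

Section I.
Lemma I_x {S} {Ax : qi S -> Prop} {F : structure S} th (H : ConS Ax F th) (x : Tn Ax F) : II th x x.
Proof.
  apply (th_ceq th H). apply ceqT_intro.
  - apply joinT_lub; apply cle_refl.
  - apply joinT_l.
Qed.

Lemma th_sym {S} {Ax : qi S -> Prop} {F : structure S} th (H : ConS Ax F th) (x y : Tn Ax F) :
  th x y -> th y x.
Proof. destruct H as [R [Sy _]]; auto. Qed.
Lemma th_trans {S} {Ax : qi S -> Prop} {F : structure S} th (H : ConS Ax F th) (x y z : Tn Ax F) :
  th x y -> th y z -> th x z.
Proof. destruct H as [R [Sy [Tr _]]]; eauto. Qed.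
Lemma th_refl {S} {Ax : qi S -> Prop} {F : structure S} th (H : ConS Ax F th) (x : Tn Ax F) :
  th x x.
Proof. destruct H as [R _]; eauto. Qed.

Lemma I_down {S} {Ax : qi S -> Prop} {F : structure S} th (H : ConS Ax F th) (x z z' : Tn Ax F) :
  cle (pr z') (pr z) -> II th x z -> II th x z'.
Proof.
  intros Hle HI. unfold II in *.
  set (a := joinT x z'). set (b := joinT x z).
  assert (E1 : th (joinT a b) (joinT a x)) by (apply (th_join th H); auto; apply (th_refl th H)).
  assert (E2 : th (joinT a b) b).
  { apply (th_ceq th H). apply ceqT_intro.
    - apply joinT_lub; [|apply cle_refl]. apply joinT_lub; [apply joinT_l|].
      eapply cle_trans; [exact Hle|apply joinT_r].
    - apply joinT_r. }
  assert (E3 : th (joinT a x) a).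
  { apply (th_ceq th H). apply ceqT_intro.
    - apply joinT_lub; [apply cle_refl|apply joinT_l].
    - apply joinT_l. }
  eapply (th_trans th H); [apply (th_sym th H), E3|]. eapply (th_trans th H); [apply (th_sym th H), E1|].
  eapply (th_trans th H); [exact E2| exact HI].
Qed.

Lemma I_join {S} {Ax : qi S -> Prop} {F : structure S} th (H : ConS Ax F th) (x z1 z2 : Tn Ax F) :
  II th x z1 -> II th x z2 -> II th x (joinT z1 z2).
Proof.
  unfold II. intros H1 H2.
  assert (E1 : th (joinT (joinT x z1) z2) (joinT x z2)) by (apply (th_join th H); auto; apply (th_refl th H)).
  assert (E2 : th (joinT x (joinT z1 z2)) (joinT (joinT x z1) z2)).
  { apply (th_ceq th H). apply ceqT_intro.
    - apply joinT_lub.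
      + eapply cle_trans; [apply joinT_l|apply joinT_l].
      + apply joinT_lub; [eapply cle_trans; [apply joinT_r|apply joinT_l]|apply joinT_r].
    - apply joinT_lub; [apply joinT_lub|].
      + apply joinT_l.
      + eapply cle_trans; [apply joinT_l|apply joinT_r].
      + eapply cle_trans; [apply joinT_r|apply joinT_r]. }
  eapply (th_trans th H); eauto. eapply (th_trans th H); eauto.
Qed.

Lemma I_th {S} {Ax : qi S -> Prop} {F : structure S} th (H : ConS Ax F th) (x z z' : Tn Ax F) :
  th z z' -> II th x z -> II th x z'.
Proof.
  unfold II; intros Hz HI. eapply (th_trans th H); [|exact HI]. apply (th_join th H).
  apply (th_refl th H). apply (th_sym th H); auto.
Qed.

Lemma I_sym {S} {Ax : qi S -> Prop} {F : structure S} th (H : ConS Ax F th) (x y : Tn Ax F) :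
  II th x y -> II th y x -> th x y.
Proof.
  unfold II; intros H1 H2.
  assert (E : th (joinT x y) (joinT y x)).
  { apply (th_ceq th H). apply ceqT_intro; apply joinT_lub; (apply joinT_l || apply joinT_r). }
  eapply (th_trans th H); [apply (th_sym th H); eauto|]. eapply (th_trans th H); eauto.
Qed.
End I.

Definition psi {S} {Ax : qi S -> Prop} {F : structure S} (th : Tn Ax F -> Tn Ax F -> Prop)
  (x : Tn Ax F) : cpair F :=
  (fun a b => exists z, II th x z /\ fst (pr z) a b,
   fun r s => exists z, II th x z /\ snd (pr z) r s).

Lemma psi_atom {S} {Ax : qi S -> Prop} {F : structure S} th (x : Tn Ax F) al :
  fatom_in (psi th x) al <-> exists z, II th x z /\ fatom_in (pr z) al.
Proof. destruct al; simpl; tauto. Qed.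

Lemma fatom_mono {S} {Ax : qi S -> Prop} {F : structure S} (z z' : Tn Ax F) al :
  cle (pr z) (pr z') -> fatom_in (pr z) al -> fatom_in (pr z') al.
Proof. apply fatom_in_cle. Qed.

Lemma psi_list {S} {Ax : qi S -> Prop} {F : structure S} th (H : ConS Ax F th) (x : Tn Ax F) L :
  (forall al, In al L -> fatom_in (psi th x) al) ->
  exists z, II th x z /\ forall al, In al L -> fatom_in (pr z) al.
Proof.
  induction L as [|al L IH]; intro HL.
  - exists x; split; [apply I_x; auto|]. simpl; tauto.
  - destruct (proj1 (psi_atom th x al) (HL al (or_introl eq_refl))) as [z1 [I1 A1]].
    destruct IH as [z2 [I2 A2]]; [intros; apply HL; right; auto|].
    exists (joinT z1 z2). split; [apply I_join; auto|].
    intros b [<-|Hb].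
    + eapply fatom_mono; [apply joinT_l|]; auto.
    + eapply fatom_mono; [apply joinT_r|]; auto.
Qed.

Lemma psi_fin {S} {Ax : qi S -> Prop} {F : structure S} th (H : ConS Ax F th) (x : Tn Ax F) k
  (P : fin k -> Tn Ax F -> Prop) :
  (forall i z z', cle (pr z) (pr z') -> P i z -> P i z') ->
  (forall i, exists z, II th x z /\ P i z) -> exists z, II th x z /\ forall i, P i z.
Proof.
  intros Hm Hi.
  assert (G : forall m, m <= k -> exists z, II th x z /\ forall i, proj1_sig i < m -> P i z).
  { induction m as [|m IH]; intro Hmk.
    - exists x; split; [apply I_x; auto|]. intros i Hi'; lia.
    - destruct IH as [z1 [I1 A1]]; [lia|].
      assert (Hlt : m < k) by lia.
      destruct (Hi (exist _ m Hlt)) as [z0 [I0 A0]].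
      exists (joinT z1 z0). split; [apply I_join; auto|].
      intros i Hi'. destruct (Nat.eq_dec (proj1_sig i) m) as [E|E].
      + destruct i as [i pi]. simpl in E. subst i.
        replace pi with Hlt by apply proof_irrelevance.
        eapply Hm; [apply joinT_r|]; auto.
      + eapply Hm; [apply joinT_l|]. apply A1. lia. }
  destruct (G k (le_n k)) as [z [Iz Az]]. exists z; split; auto.
  intro i; apply Az, (proj2_sig i).
Qed.

Lemma psi_ub {S} {Ax : qi S -> Prop} {F : structure S} th (x z : Tn Ax F) :
  II th x z -> cle (pr z) (psi th x).
Proof. intro HI; split; simpl; intros; eauto. Qed.

Lemma psi_kcong {S} {Ax : qi S -> Prop} {F : structure S} th (H : ConS Ax F th) (x : Tn Ax F) :
  kcong Ax (psi th x).
Proof.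
  apply kcong_iff. split.
  - split; [|split; [|split; [|split; [|split]]]]; simpl.
    + intro a. exists x; split; [apply I_x; auto|]. destruct (Tn_cong x) as [R _]; auto.
    + intros a b [z [Iz Hz]]. exists z; split; auto. destruct (Tn_cong z) as [R [Sy _]]; auto.
    + intros a b c [z1 [I1 H1]] [z2 [I2 H2]]. exists (joinT z1 z2); split; [apply I_join; auto|].
      destruct (Tn_cong (joinT z1 z2)) as [R [Sy [Tr _]]]. eapply Tr.
      * apply (joinT_l z1 z2); eauto.
      * apply (joinT_r z1 z2); eauto.
    + intros f a b Hab.
      destruct (psi_fin th H x _ (fun i z => fst (pr z) (a i) (b i))) as [z [Iz Az]].
      * intros i z z' Hle Hz. apply Hle; auto.
      * intro i. apply Hab.
      * exists z; split; auto. destruct (Tn_cong z) as [R [Sy [Tr [Fc _]]]]. apply Fc; auto.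
    + intros r s Hr. exists x; split; [apply I_x; auto|]. destruct (Tn_cong x) as [R [Sy [Tr [Fc [Rc _]]]]]; auto.
    + intros r s s' Hss [z1 [I1 H1]].
      destruct (psi_fin th H x _ (fun i z => fst (pr z) (s i) (s' i))) as [z2 [I2 A2]].
      * intros i z z' Hle Hz. apply Hle; auto.
      * intro i. apply Hss.
      * exists (joinT z1 z2); split; [apply I_join; auto|].
        destruct (Tn_cong (joinT z1 z2)) as [R [Sy [Tr [Fc [Rc Rcl]]]]].
        eapply Rcl; [intro i; apply (joinT_r z1 z2), A2|]. apply (joinT_l z1 z2); auto.
  - intros q Hq w Hp.
    destruct (psi_list th H x (map (evatom F w) (prems q))) as [z [Iz Az]].
    + intros al Hal. apply in_map_iff in Hal. destruct Hal as [a [<- Ha]]. auto.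
    + apply (fatom_in_cle (pr z)); [apply psi_ub; auto|].
      apply (kcong_qsat Ax (pr z) q (Tn_kcong z) Hq). intros a Ha. apply Az. apply in_map; auto.
Qed.

Lemma psi_cpt {S} {Ax : qi S -> Prop} {F : structure S} th (H : ConS Ax F th) (x u : Tn Ax F) :
  cle (pr u) (psi th x) -> II th x u.
Proof.
  intro Hu. destruct u as [u0 [lu [Hu1 Hu2]]] eqn:Eu. unfold pr in Hu; simpl in Hu.
  destruct (psi_list th H x lu) as [z [Iz Az]].
  - intros al Hal. eapply fatom_in_cle; [exact Hu|]. eapply fatom_in_cle; [exact Hu2|].
    apply conj_list_in; auto.
  - rewrite <- Eu. apply (I_down th H x z); auto. rewrite Eu. unfold pr; simpl.
    eapply cle_trans; [exact Hu1|]. apply conj_list_le; [apply Tn_kcong|]; auto.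
Qed.

Definition Kth {S} (Ax : qi S -> Prop) (F : structure S) (th : Tn Ax F -> Tn Ax F -> Prop)
  (A : structure S) : Prop :=
  Mod Ax A /\ forall (h : hom F A) x y, th x y -> (satc h (pr x) <-> satc h (pr y)).

Definition piq {S} {F : structure S} (p : cpair F) (Hc : is_congruence p) : hom F (quotient p).
Proof.
  refine (@Hom S F (quotient p) (fun a => qcls (fst p) a) _ _).
  - intros f args. simpl. apply (qeq p Hc). pose proof Hc as [R [Sy [Tr [Fc _]]]].
    eapply Tr; [apply Sy, qrep_qcls; auto|]. eapply Tr; [|apply qrep_qcls; auto].
    apply Fc. intro i. apply qrep_qcls; auto.
  - intros r args Hr. simpl. pose proof Hc as [R [Sy [Tr [Fc [Rc Rcl]]]]].
    eapply Rcl; [|apply Rc; exact Hr]. intro i; apply qrep_qcls; auto.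
Defined.

Lemma satc_piq {S} {F : structure S} (p : cpair F) (Hc : is_congruence p) u :
  satc (piq p Hc) u <-> cle u p.
Proof.
  pose proof Hc as [R [Sy [Tr [Fc [Rc Rcl]]]]].
  assert (E1 : forall a b, fst (kerc (piq p Hc)) a b <-> fst p a b).
  { intros a b; simpl. split; intro K.
    - pose proof (qrep_qcls p Hc a) as Ka. rewrite K in Ka.
      eapply Tr; [exact Ka|]. apply Sy, qrep_qcls; auto.
    - apply (qeq p Hc). eapply Tr; [apply Sy, qrep_qcls; auto|]. eapply Tr; [exact K|].
      apply qrep_qcls; auto. }
  assert (E2 : forall r s, snd (kerc (piq p Hc)) r s <-> snd p r s).
  { intros r s; simpl. split; intro K; (eapply Rcl; [|exact K]); intro i;
      [apply Sy|]; apply qrep_qcls; auto. }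
  unfold satc, cle. split; intros [K1 K2]; split; intros; [apply E1|apply E2|apply E1|apply E2]; auto.
Qed.

Lemma conj_compact {S} (Ax : qi S -> Prop) {F : structure S} (l : list (fatom F)) :
  compact Ax (conj_list Ax l).
Proof. exists l; apply ceq_refl. Qed.

Lemma quot_K {S} (Ax : qi S -> Prop) n (F : structure S) (gen : fin n -> F)
  (HF : is_free Ax n F gen) th (H : ConS Ax F th) (x : Tn Ax F) :
  Kth Ax F th (quotient (psi th x)).
Proof.
  set (p := psi th x). pose proof (psi_kcong th H x) as Hk. fold p in Hk.
  pose proof (kcong_cong Ax p Hk) as Hc.
  pose proof Hc as [R [Sy [Tr [Fc [Rc Rcl]]]]].
  assert (HA : Mod Ax (quotient p)). { destruct Hk; auto. }
  split; auto.
  intros h u w Huw.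
  pose proof HF as [HF1 [HF2 HF3]].
  destruct (HF3 F HF1 (fun i => qrep (h (gen i)))) as [eps Heps].
  assert (Hr : forall a, fst p (qrep (h a)) (eps a)).
  { intro a. destruct (HF2 a) as [t <-]. rewrite !eval_hom.
    eapply Tr; [apply (qeval p Hc)|]. simpl.
    rewrite (eval_ext F (fun k => eps (gen k)) (fun k => qrep (h (gen k)))); [apply R|]. intro; auto. }
  assert (Hat : forall al, fatom_in (kerc h) al <-> fatom_in p (fatom_map eps al)).
  { intros [a b|r s]; simpl.
    - split; intro K.
      + eapply Tr; [apply Sy, Hr|]. rewrite K. apply Hr.
      + apply (qeq p Hc). eapply Tr; [apply Hr|]. eapply Tr; [exact K|]. apply Sy, Hr.
    - split; intro K; (eapply Rcl; [|exact K]); intro i; [|apply Sy]; apply Hr. }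
  assert (Key : forall v : Tn Ax F, exists v' : Tn Ax F, ehat_rel eps v v' /\
             (satc h (pr v) <-> II th x v')).
  { intro v. destruct v as [v0 [lv Hv]] eqn:Ev.
    exists (exist _ (conj_list Ax (map (fatom_map eps) lv))
              (conj_compact Ax (map (fatom_map eps) lv)) : Tn Ax F).
    split.
    - exists lv. split; auto. apply ceq_refl.
    - unfold pr at 1; simpl. rewrite (satc_conj Ax h v0 lv HA Hv). split.
      + intro K. apply (psi_cpt th H x). unfold pr; simpl.
        apply conj_list_le; auto. intros al Hal. apply in_map_iff in Hal.
        destruct Hal as [b [<- Hb]]. apply Hat; auto.
      + intros K al Hal. apply Hat. apply psi_ub in K. unfold pr in K; simpl in K.
        eapply fatom_in_cle; [exact K|]. apply conj_list_in, in_map; auto. }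
  destruct (Key u) as [u' [Eu Su]]. destruct (Key w) as [w' [Ew Sw]].
  rewrite Su, Sw. pose proof H as [_ [Syt [_ [_ Eh]]]].
  split; intro K; eapply (I_th th H); [| exact K| |exact K]; eauto.
Qed.

Definition Tth {S} (Ax : qi S -> Prop) (F : structure S) (th : Tn Ax F -> Tn Ax F -> Prop)
  (q : qi S) : Prop := forall A, Kth Ax F th A -> sat A q.

Fixpoint tmap {S V W} (g : V -> W) (t : term S V) : term S W :=
  match t with Var x => Var (g x) | App f args => App f (fun i => tmap g (args i)) end.

Lemma eval_tmap {S} (A : structure S) {V W} (g : V -> W) (v : W -> A) t :
  eval A v (tmap g t) = eval A (fun x => v (g x)) t.
Proof.
  induction t as [x|f args IH]; simpl; auto. f_equal; apply functional_extensionality; auto.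
Qed.

Lemma occ_tmap {S} n (t : term S (fin n)) k :
  occurs_term k (tmap (fun i : fin n => proj1_sig i) t) -> k < n.
Proof.
  induction t as [x|f args IH]; simpl.
  - intros ->. apply (proj2_sig x).
  - intros [i Hi]. eauto.
Qed.

Definition encA {S} {n} {F : structure S} (tm : F -> term S (fin n)) (al : fatom F) : atom S nat :=
  match al with
  | FEq a b => AEq (tmap (fun i : fin n => proj1_sig i) (tm a)) (tmap (fun i : fin n => proj1_sig i) (tm b))
  | FRel r s => ARel r (fun j => tmap (fun i : fin n => proj1_sig i) (tm (s j)))
  end.

Lemma encA_holds {S} {n} {F : structure S} (gen : fin n -> F) (tm : F -> term S (fin n))
  (Htm : forall a, eval F gen (tm a) = a) {A : structure S} (h : hom F A) (v : nat -> A) al :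
  (forall i : fin n, v (proj1_sig i) = h (gen i)) ->
  (holds A v (encA tm al) <-> fatom_in (kerc h) al).
Proof.
  intro Hv.
  assert (E : forall a, eval A v (tmap (fun i : fin n => proj1_sig i) (tm a)) = h a).
  { intro a. rewrite eval_tmap. rewrite (eval_ext A _ (fun i => h (gen i))) by auto.
    rewrite <- eval_hom. rewrite Htm. auto. }
  destruct al as [a b|r s]; simpl.
  - rewrite !E; tauto.
  - replace (fun i => eval A v (tmap (fun i0 : fin n => proj1_sig i0) (tm (s i)))) with (fun i => h (s i));
      [tauto|]. apply functional_extensionality; intro; rewrite E; auto.
Qed.

Definition encq {S} {n} {F : structure S} (tm : F -> term S (fin n)) (lx : list (fatom F)) beta : qi S :=
  QI (map (encA tm) lx) (encA tm beta).

Lemma encq_nv {S} {n} {F : structure S} (tm : F -> term S (fin n)) lx beta :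
  nvars_le n (encq tm lx beta).
Proof.
  exists (seq 0 n). split; [rewrite length_seq; lia|].
  assert (Ha : forall al k, occurs_atom k (encA tm al) -> In k (seq 0 n)).
  { intros [a b|r s] k; simpl; intro Hk; apply in_seq.
    - destruct Hk as [Hk|Hk]; apply occ_tmap in Hk; lia.
    - destruct Hk as [j Hk]; apply occ_tmap in Hk; lia. }
  intros k [[a [Ha1 Ha2]]|Hk]; simpl in *.
  - apply in_map_iff in Ha1. destruct Ha1 as [al [<- _]]. eauto.
  - eauto.
Qed.

Lemma val_of {S} {n} (Hn : 1 <= n) {F A : structure S} (gen : fin n -> F) (h : hom F A) :
  exists v : nat -> A, forall i : fin n, v (proj1_sig i) = h (gen i).
Proof.
  exists (fun k => h (gen (to_fin n Hn k))). intros [k p]. simpl. unfold to_fin.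
  destruct Compare_dec.lt_dec as [p'|]; [|contradiction].
  replace p' with p by apply proof_irrelevance. auto.
Qed.

Lemma encq_T {S} (Ax : qi S -> Prop) n (F : structure S) (gen : fin n -> F)
  (HF : is_free Ax n F gen) (tm : F -> term S (fin n)) (Htm : forall a, eval F gen (tm a) = a)
  th (x y : Tn Ax F) lx ly beta :
  th x y -> ceq (pr x) (conj_list Ax lx) -> ceq (pr y) (conj_list Ax ly) -> In beta ly ->
  Tth Ax F th (encq tm lx beta).
Proof.
  intros Hxy Hx Hy Hb A [HA HK] v Hp.
  pose proof HF as [_ [_ HF3]].
  destruct (HF3 A HA (fun i => v (proj1_sig i))) as [h Hh].
  assert (Hv : forall i : fin n, v (proj1_sig i) = h (gen i)) by (intro; rewrite Hh; auto).
  simpl. apply (encA_holds gen tm Htm h v _ Hv).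
  assert (Sx : satc h (pr x)).
  { apply (satc_conj Ax h _ lx HA Hx). intros al Hal. apply (encA_holds gen tm Htm h v _ Hv).
    apply Hp. simpl. apply in_map; auto. }
  apply (HK h x y Hxy) in Sx. exact (proj1 (satc_conj Ax h _ ly HA Hy) Sx beta Hb).
Qed.

Lemma EncK {S} (Ax : qi S -> Prop) n (Hn : 1 <= n) (F : structure S) (gen : fin n -> F)
  (HF : is_free Ax n F gen) (tm : F -> term S (fin n)) (Htm : forall a, eval F gen (tm a) = a)
  th (H : ConS Ax F th) A :
  Mod (fun q => Ax q \/ (Tth Ax F th q /\ nvars_le n q)) A -> Kth Ax F th A.
Proof.
  intro HA. assert (HAx : Mod Ax A) by (intros q Hq; apply HA; auto).
  split; auto.
  assert (D : forall (h : hom F A) x y, th x y -> satc h (pr x) -> satc h (pr y)).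
  { intros h x y Hxy Sx.
    destruct (proj2_sig x) as [lx Hx]. destruct (proj2_sig y) as [ly Hy].
    destruct (val_of Hn gen h) as [v Hv].
    apply (satc_conj Ax h _ ly HAx Hy). intros beta Hb.
    apply (encA_holds gen tm Htm h v _ Hv).
    apply (HA (encq tm lx beta)).
    - right. split; [eapply encq_T; eauto|apply encq_nv].
    - intros a Ha. simpl in Ha. apply in_map_iff in Ha. destruct Ha as [al [<- Hal]].
      apply (encA_holds gen tm Htm h v _ Hv).
      exact (proj1 (satc_conj Ax h _ lx HAx Hx) Sx al Hal). }
  intros h x y Hxy. split; apply D; auto. apply (th_sym th H); auto.
Qed.

Lemma Tth_rel {S} (Ax : qi S -> Prop) n (Hn : 1 <= n) (F : structure S) (gen : fin n -> F)
  (HF : is_free Ax n F gen) (tm : F -> term S (fin n)) (Htm : forall a, eval F gen (tm a) = a)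
  th (H : ConS Ax F th) : rel_theory Ax n (Tth Ax F th).
Proof.
  split; [|split].
  - exists (Tth Ax F th). intro q. split.
    + intros Hq A HA. apply HA; auto.
    + intros Hq A HA. apply Hq. intros q' Hq'. apply Hq'; auto.
  - intros q Hq A [HA _]. apply Hq; auto.
  - intro q. split.
    + intros Hq A HA. apply Hq. eapply EncK; eauto.
    + intros Hq A HA. apply Hq. intros q' [Hq'|[Hq' _]]; [apply HA; auto|apply Hq'; auto].
Qed.

Theorem theorem3p3 (S : signature) (Ax : qi S -> Prop) (n : nat) (Hn : 1 <= n)
  (F : structure S) (gen : fin n -> F) (HF : is_free Ax n F gen) :
  exists f : {T : qi S -> Prop | rel_theory Ax n T} -> (Tn Ax F -> Tn Ax F -> Prop),
    (forall T, ConS Ax F (f T)) /\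
    (forall T T', (forall q, proj1_sig T q -> proj1_sig T' q) <->
                  (forall x y, f T x y -> f T' x y)) /\
    (forall th, ConS Ax F th -> exists T, forall x y, th x y <-> f T x y).
Proof.
  exists (fun T => fT Ax F (proj1_sig T)). split; [|split].
  - intros [T HT]. apply fT_ConS. simpl. intros A HA. eapply mod_T_Ax; eauto.
  - intros [T HT] [T' HT']. simpl. apply (order_part Ax n Hn F gen HF); auto.
  - intros th H.
    pose proof HF as [HF1 [HF2 HF3]].
    pose (tm := fun a => proj1_sig (constructive_indefinite_description _ (HF2 a))).
    assert (Htm : forall a, eval F gen (tm a) = a).
    { intro a. unfold tm. destruct constructive_indefinite_description; auto. }
    exists (exist _ (Tth Ax F th) (Tth_rel Ax n Hn F gen HF tm Htm th H)). simpl.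
    intros x y. split.
    + intros Hxy A HA h. assert (K : Kth Ax F th A).
      { apply (EncK Ax n Hn F gen HF tm Htm th H). intros q [Hq|[Hq _]]; apply HA; auto.
        intros B [HB _]. apply HB; auto. }
      destruct K as [_ K]. apply K; auto.
    + intro Hf.
      assert (G : forall u v, fT Ax F (Tth Ax F th) u v -> II th u v).
      { intros u v Huv.
        pose proof (quot_K Ax n F gen HF th H u) as Ku.
        pose proof (kcong_cong Ax _ (psi_kcong th H u)) as Hc.
        specialize (Huv _ (fun q Hq => Hq _ Ku) (piq _ Hc)).
        rewrite !satc_piq in Huv. apply (psi_cpt th H u). apply Huv.
        apply psi_ub. apply I_x; auto. }
      apply (I_sym th H); apply G; auto.
      intros A HA h; specialize (Hf A HA h); tauto.
Qed.
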